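(* Let $G$ be a graph obtained as follows: start with a connected bipartite graph with bipartition $X\sqcup Y$, $X=\{x_1,\dots,x_n\}$, $Y=\{y_1,\dots,y_m\}$, $n,m\ge 1$; attach $f_i\ge 1$ leaves (new vertices adjacent only to $x_i$) to each $x_i$; and attach $t_j\ge 0$ pendant triangles to each $y_j$ (two new vertices $u,v$ with edges $\{y_j,u\},\{y_j,v\},\{u,v\}$). Let $F=\sum_{i=1}^n f_i$ and $m_0=|\{j\in[m]: t_j=0\}|$. Then $G$ is pseudo-Gorenstein$^{*}$ if and only if $n+F+m_0$ is even.
   Context: For a finite simple graph $G$ on vertex set $[N]$, let $S=K[x_1,\dots,x_N]$ ($K$ a field) and $I(G)$ the edge ideal generated by $x_ix_j$, $\{i,j\}\in E(G)$. Let $\alpha(G)$ be the independence number (equal to $\dim S/I(G)$). Write the Hilbert series of $S/I(G)$ uniquely as $(h_0+\dots+h_st^s)/(1-t)^{\alpha(G)}$ with $h_s\ne 0$, and $\mathfrak a(G)=s-\alpha(G)$. $G$ is pseudo-Gorenstein$^{*}$ if $h_s=1$ and $\mathfrak a(G)=0$. *)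

(* Defs.v *)
From HB Require Import structures.
From mathcomp Require Import all_boot all_order all_algebra.
Set Implicit Arguments. Unset Strict Implicit. Unset Printing Implicit Defensive.
Import GRing.Theory Num.Theory.

(* Simple graphs are given by a symmetric irreflexive relation e on a finType V;
   the polynomial ring S = K[x_v | v in V]. *)

Section Graphs.
Variables (V : finType) (e : rel V).

Definition independent (A : {set V}) : bool :=
  [forall u, forall v, (u \in A) && (v \in A) ==> ~~ e u v].

Definition alpha : nat := \max_(A : {set V} | independent A) #|A|.

(* Hilbert function of S/I(G): since I(G) is a monomial ideal, the monomials
   not in I(G) form a K-basis of S/I(G); a monomial x^a lies outside I(G) iff
   its support is independent.  dim_K (S/I(G))_d is thus the number of
   exponent vectors a : V -> N with |a| = d and independent support
   (exponents are < d+1 automatically). *)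
Definition hilb (d : nat) : nat :=
  #|[set a : {ffun V -> 'I_d.+1} |
      (\sum_(v : V) (a v : nat) == d) && independent [set v | (a v : nat) != 0]]|.

(* Coefficients of the numerator h(t) = HS(t) * (1-t)^alpha(G) of the Hilbert
   series of S/I(G) (coefficientwise Cauchy product of power series). *)
Definition hcoef (k : nat) : int :=
  (\sum_(j < k.+1) (-1) ^+ j * ('C(alpha, j))%:Z * (hilb (k - j))%:Z)%R.

(* pseudo-Gorenstein*: with h(t) = h_0 + ... + h_s t^s, h_s <> 0, we need
   h_s = 1 and s - alpha = 0, i.e. h_alpha = 1 and h_k = 0 for all k > alpha. *)
Definition pseudo_gorenstein_star : Prop :=
  hcoef alpha = 1%R /\ (forall k, (alpha < k)%N -> hcoef k = 0%R).

End Graphs.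

(* Vertices: x_i (i < n), y_j (j < m), leaves (i, l) with l < f i attached to
   x_i, and triangle vertices ((j, k), c) with k < t j, c : bool (the two new
   vertices u, v of the k-th pendant triangle at y_j). *)
Definition vert (n m : nat) (f : 'I_n -> nat) (t : 'I_m -> nat) : finType :=
  ((('I_n + 'I_m) + {i : 'I_n & 'I_(f i)}) + ({j : 'I_m & 'I_(t j)} * bool))%type.

Definition adj0 n m f t (b : 'I_n -> 'I_m -> bool) (u v : vert f t) : bool :=
  match u, v with
  | inl (inl (inl x)), inl (inl (inr y)) => b x y
  | inl (inl (inl x)), inl (inr l) => tag l == x
  | inl (inl (inr y)), inr (p, _) => tag p == y
  | inr (p, c), inr (q, c') => (p == q) && (c != c')
  | _, _ => false
  end.

Definition gedge n m f t (b : 'I_n -> 'I_m -> bool) : rel (vert f t) :=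
  fun u v => adj0 b u v || adj0 b v u.

Definition bip_rel n m (b : 'I_n -> 'I_m -> bool) : rel ('I_n + 'I_m)%type :=
  fun u v => match u, v with
  | inl x, inr y => b x y
  | inr y, inl x => b x y
  | _, _ => false
  end.

Definition bip_connected n m (b : 'I_n -> 'I_m -> bool) : Prop :=
  forall u v : ('I_n + 'I_m)%type, connect (bip_rel b) u v.

(* Main.v *)
Require Import Defs.
From mathcomp Require Import all_boot all_order all_algebra.
From mathcomp Require Import zify ring.
Set Implicit Arguments. Unset Strict Implicit. Unset Printing Implicit Defensive.
Import GRing.Theory Num.Theory.
Section P1sec.
Local Open Scope ring_scope.

Definition eqk (k : nat) (p q : {poly int}) := forall i, (i <= k)%N -> p`_i = q`_i.

Lemma eqk_refl k p : eqk k p p. Proof. by []. Qed.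
Lemma eqk_sym k p q : eqk k p q -> eqk k q p. Proof. by move=> h i hi; rewrite h. Qed.
Lemma eqk_trans k p q r : eqk k p q -> eqk k q r -> eqk k p r.
Proof. by move=> h1 h2 i hi; rewrite h1 // h2. Qed.
Lemma eqk_add k p q p' q' : eqk k p q -> eqk k p' q' -> eqk k (p + p') (q + q').
Proof. by move=> h1 h2 i hi; rewrite !coefD h1 // h2. Qed.
Lemma eqk_mul k r p q : eqk k p q -> eqk k (r * p) (r * q).
Proof.
move=> h i hi; rewrite !coefM; apply: eq_bigr => j _; rewrite h //.
exact: leq_trans (leq_subr _ _) hi.
Qed.
Lemma eqk_cancel k p q : eqk k ((1 - 'X) * p) ((1 - 'X) * q) -> eqk k p q.
Proof.
move=> h; elim=> [|i IH] hi.
  by have := h 0%N hi; rewrite !mulrBl !mul1r !coefB !coefXM /= !subr0.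
have := h i.+1 hi; rewrite !mulrBl !mul1r !coefB !coefXM /= IH ?(ltnW hi) //.
by move/addIr.
Qed.

Lemma coef_1subX (r j : nat) : ((1 - 'X) ^+ r : {poly int})`_j = (-1) ^+ j * ('C(r, j))%:R.
Proof.
elim: r j => [|r IH] j.
  by rewrite expr0 coef1; case: j => [|j]; rewrite ?bin0 ?mulr1 // bin0n mulr0.
rewrite exprS mulrBl mul1r coefB coefXM IH.
case: j => [|j] /=; first by rewrite !bin0 subr0.
rewrite IH binS natrD exprS; ring.
Qed.

End P1sec.


Section Gen.
Variables (V : finType) (e : rel V).
Hypothesis esym : symmetric e.
Hypothesis eirr : irreflexive e.

Definition supp k (a : {ffun V -> 'I_k}) := [set v | (a v : nat) != 0%N].

Definition HU (U : {set V}) (d : nat) : nat :=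
  #|[set a : {ffun V -> 'I_d.+1} |
      (\sum_(v : V) (a v : nat) == d) && independent e [set v | (a v : nat) != 0%N]
      && ([set v | (a v : nat) != 0%N] \subset U)]|.

Lemma indepP (A : {set V}) : reflect (forall u v, u \in A -> v \in A -> ~~ e u v) (independent e A).
Proof.
apply: (iffP forallP) => [h u v hu hv | h u].
  by have /forallP/(_ v) := h u; rewrite hu hv.
by apply/forallP => v; apply/implyP => /andP[hu hv]; apply: h.
Qed.

Lemma indep_sub (A B : {set V}) : A \subset B -> independent e B -> independent e A.
Proof.
move=> /subsetP s /indepP h; apply/indepP => u v hu hv; exact: h (s _ hu) (s _ hv).
Qed.

Lemma indepU1 (w : V) (A : {set V}) :
  independent e A -> (forall u, u \in A -> ~~ e w u) -> independent e (w |: A).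
Proof.
move=> /indepP h hw; apply/indepP => u v; rewrite !in_setU1.
case/predU1P => [->|hu]; case/predU1P => [->|hv]; first by rewrite eirr.
- exact: hw.
- by rewrite esym; apply: hw.
- exact: h.
Qed.

Lemma HU0 U : HU U 0 = 1%N.
Proof.
rewrite /HU (_ : [set a | _] = setT) ?cardsT ?card_ffun ?card_ord ?exp1n //.
apply/setP => a; rewrite !inE.
have z : forall v, (a v : nat) = 0%N by move=> v; case: (a v) => -[].
rewrite big1 // (_ : [set v | _] = set0) ?sub0set ?andbT.
  by apply/forallP => u; apply/forallP => v; rewrite inE.
by apply/setP => v; rewrite !inE z.
Qed.


Lemma sum_eqv (v : V) : (\sum_(w : V) ((w == v) : nat) = 1)%N.
Proof. by rewrite (bigD1 v) //= eqxx big1 // => w /negbTE ->. Qed.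

Lemma le_sum_term (F : V -> nat) w : (F w <= \sum_u F u)%N.
Proof. by rewrite (bigD1 w) //= leq_addr. Qed.

Lemma HU_rec (U : {set V}) (v : V) (d : nat) : v \in U ->
  HU U d.+1 = (HU (U :\ v) d.+1 + HU (U :\: [set w | e v w]) d)%N.
Proof.
move=> vU; rewrite /HU.
set S := [set a : {ffun V -> 'I_d.+2} | _].
set T := [set a : {ffun V -> 'I_d.+1} | _].
rewrite -(cardsID [set a : {ffun V -> 'I_d.+2} | (a v : nat) == 0%N] S); congr (_ + _)%N.
  apply: eq_card => a; rewrite !inE subsetD1 inE negbK.
  by case: (_ == _) => //=; case: (independent _ _) => //=; rewrite andbC.
pose inc (a : {ffun V -> 'I_d.+1}) : {ffun V -> 'I_d.+2} := [ffun w => inord (a w + (w == v))].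
have incE a w : (inc a w : nat) = (a w + (w == v))%N.
  by rewrite ffunE inordK //; have := ltn_ord (a w); case: (w == v) => /=; lia.
have inc_inj : injective inc.
  move=> a1 a2 h; apply/ffunP => w; apply/val_inj => /=.
  by have := incE a1 w; rewrite h incE => /addIn.
rewrite -(card_imset T inc_inj); apply: eq_card => a; rewrite !inE.
apply/idP/imsetP.
- case/andP=> av /andP[/andP[/eqP sa ia] sU].
  pose a' : {ffun V -> 'I_d.+1} := [ffun w => inord (a w - (w == v))].
  have le1 w : ((w == v) <= a w)%N by case: eqP => [->|]; rewrite ?lt0n.
  have sd : (\sum_w (a w - (w == v)) = d)%N.
    have : (\sum_w (a w - (w == v)) + \sum_w ((w == v) : nat) = \sum_w (a w : nat))%N.
      by rewrite -big_split; apply: eq_bigr => w _ /=; rewrite subnK.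
    by rewrite sum_eqv sa addn1 => -[].
  have a'E w : (a' w : nat) = (a w - (w == v))%N.
    by rewrite ffunE inordK // ltnS; apply: leq_trans (le_sum_term (fun u => a u - (u == v))%N w) _; rewrite sd.
  exists a'.
    rewrite inE (eq_bigr _ (fun w _ => a'E w)) sd eqxx /=.
    have ss : [set w | (a' w : nat) != 0%N] \subset [set w | (a w : nat) != 0%N].
      by apply/subsetP => w; rewrite !inE a'E; apply: contra => /eqP ->.
    rewrite (indep_sub ss ia) /=; apply/subsetP => w hw.
    rewrite !inE (subsetP sU _ (subsetP ss _ hw)) andbT.
    have hwa := subsetP ss _ hw.
    rewrite inE in hwa; move/indepP: ia => /(_ v w); rewrite !inE av hwa; by apply.
  apply/ffunP => w; apply/val_inj => /=; rewrite incE a'E subnK //.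
- case=> a' + ->; rewrite inE => /andP[/andP[/eqP sa ia] sU].
  have ss : [set w | (inc a' w : nat) != 0%N] = v |: [set w | (a' w : nat) != 0%N].
    apply/setP => w; rewrite !inE (incE a' w); case h: (w == v); rewrite ?addn1 ?addn0 //=.
  rewrite (incE a' v) eqxx addn1 ss (eq_bigr _ (fun w _ => incE a' w)) big_split /=.
  rewrite sa sum_eqv [X in (X == _)]addn1 eqxx /=; apply/andP; split.
    apply: indepU1 => // u; rewrite inE => hu.
    by have := subsetP sU u; rewrite !inE hu => /(_ isT) /andP[].
  rewrite subUset sub1set vU /=; apply: subset_trans sU _.
  by apply/subsetP => w; rewrite !inE => /andP[].
Qed.


Lemma HU_set0 d : HU set0 d.+1 = 0%N.
Proof.
apply/eqP; rewrite cards_eq0; apply/eqP/setP => a; rewrite !inE subset0.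
apply/negbTE; apply/negP => /andP[/andP[/eqP sa _] /eqP s0].
have z w : (a w : nat) = 0%N.
  by have := congr1 (fun S : {set V} => w \in S) s0; rewrite !inE => /negbFE/eqP.
by move: sa; rewrite big1.
Qed.

Local Open Scope ring_scope.

Definition Qp (U : {set V}) (r : nat) : {poly int} :=
  \sum_(A : {set V} | independent e A && (A \subset U)) 'X^#|A| * (1 - 'X) ^+ (r - #|A|).
Definition al (U : {set V}) : nat := \max_(A : {set V} | independent e A && (A \subset U)) #|A|.
Definition Hp (U : {set V}) (k : nat) : {poly int} := \poly_(i < k.+1) (HU U i)%:Z.

Lemma al_sub (U U' : {set V}) : U' \subset U -> (al U' <= al U)%N.
Proof.
move=> s; apply/bigmax_leqP => A /andP[iA sA]; apply: leq_bigmax_cond.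
by rewrite iA (subset_trans sA s).
Qed.

Lemma card_le_al (U A : {set V}) : independent e A -> A \subset U -> (#|A| <= al U)%N.
Proof. by move=> iA sA; rewrite /al; apply: (@leq_bigmax_cond _ (fun A : {set V} => independent e A && (A \subset U)) (fun A : {set V} => #|A|) A); rewrite iA sA. Qed.

Lemma sum_with_v (Z : {set V}) (v : V) (F : {set V} -> {poly int}) : v \in Z ->
  \sum_(A : {set V} | independent e A && (A \subset Z) && (v \in A)) F A =
  \sum_(B : {set V} | independent e B && (B \subset (Z :\: [set w | e v w]) :\ v)) F (v |: B).
Proof.
move=> vZ.
rewrite (reindex_onto (fun B => v |: B) (fun A => A :\ v)); last first.
  by move=> A /andP[_ vA]; rewrite setD1K.
apply: eq_bigl => B; rewrite setU11 andbT.
case vB: (v \in B).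
  transitivity false; last by symmetry; apply/negbTE; rewrite subsetD1 vB !andbF.
  by apply/negbTE; apply/negP => /andP[_ /eqP h]; move: vB; rewrite -h setD11.
rewrite setU1K ?vB // eqxx andbT subsetD1 vB andbT subsetD subUset sub1set vZ /=.
apply/idP/idP.
- case/andP => iv sB; rewrite (indep_sub (subsetU1 v B) iv) sB /=.
  rewrite -setI_eq0; apply/eqP/setP => w; rewrite !inE; apply/negbTE; apply/negP => /andP[wB evw].
  by move/indepP: iv => /(_ v w); rewrite setU11 inE wB orbT evw => /(_ isT isT).
- case/and3P => iB sB dB; rewrite sB andbT; apply: indepU1 => // u uB.
  apply/negP => evu; move: dB; rewrite -setI_eq0 => /eqP/setP/(_ u).
  by rewrite !inE uB evu.
Qed.

Lemma Q_rec (U : {set V}) (v : V) (r : nat) : v \in U -> (al U <= r)%N ->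
  Qp U r = Qp (U :\ v) r + 'X * Qp (U :\: [set w | e v w]) r.
Proof.
move=> vU hr; set W := U :\: [set w | e v w].
have vW : v \in W by rewrite !inE eirr vU.
have WW : W :\: [set w | e v w] = W.
  by apply/setP => w; rewrite !inE; case: (e v w).
rewrite /Qp (bigID (fun A : {set V} => v \in A)) /= addrC; congr (_ + _).
  by apply: eq_bigl => A; rewrite subsetD1 andbA.
rewrite (bigID (fun A : {set V} => v \in A) (fun A : {set V} => independent e A && (A \subset W))) /=.
rewrite (sum_with_v _ vU) (sum_with_v _ vW) WW.
rewrite (_ : \sum_(A | independent e A && (A \subset W) && (v \notin A)) _ =
   \sum_(B | independent e B && (B \subset W :\ v)) 'X^#|B| * (1 - 'X) ^+ (r - #|B|)); last first.
  by apply: eq_bigl => A; rewrite subsetD1 andbA.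
rewrite -big_split mulr_sumr /=; apply: eq_bigr => B /andP[iB sB].
have vB : v \notin B by apply/negP => vB; have := subsetP sB v vB; rewrite !inE eqxx.
have hB : (#|B|.+1 <= r)%N.
  apply: leq_trans hr; have -> : #|B|.+1 = #|v |: B| by rewrite cardsU1 vB.
  apply: card_le_al; first by apply: indepU1 => // u uB; have := subsetP sB u uB; rewrite !inE => /andP[_ /andP[]].
  by rewrite subUset sub1set vU; apply: subset_trans sB _; apply/subsetP => w; rewrite !inE => /andP[_ /andP[]].
rewrite cardsU1 (negbTE vB) /= add1n.
have -> : (r - #|B| = (r - #|B|.+1).+1)%N by lia.
rewrite !exprS; ring.
Qed.


Lemma Hp_rec (U : {set V}) (v : V) (k : nat) : v \in U ->
  eqk k (Hp U k) (Hp (U :\ v) k + 'X * Hp (U :\: [set w | e v w]) k).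
Proof.
move=> vU i hi; rewrite coefD coefXM !coef_poly ltnS hi.
case: i hi => [|i] hi /=; first by rewrite !HU0 addr0.
by rewrite ltnS (ltnW hi) (HU_rec _ vU) PoszD.
Qed.

Lemma Hp_set0 k : eqk k (Hp set0 k) 1.
Proof.
move=> i hi; rewrite coef_poly ltnS hi coef1.
by case: i hi => [|i] hi; rewrite ?HU0 ?HU_set0.
Qed.

Lemma Qp_set0 r : Qp set0 r = (1 - 'X) ^+ r.
Proof.
rewrite /Qp (eq_bigl (fun A => A == set0)) ?big_pred1_eq ?cards0 ?subn0 ?expr0 ?mul1r //.
move=> A; rewrite subset0; case: eqP => [->|]; rewrite ?andbF ?andbT //.
by apply/forallP => u; apply/forallP => w; rewrite inE.
Qed.

Lemma main_eqk (r k : nat) (U : {set V}) : (al U <= r)%N ->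
  eqk k ((1 - 'X) ^+ r * Hp U k) (Qp U r).
Proof.
have [N] := ubnP #|U|; elim: N U => [|N IH] U // hN hr.
have [->|/set0Pn [v vU]] := eqVneq U set0.
  by rewrite Qp_set0; rewrite -{2}[(1 - 'X) ^+ r]mulr1; apply: eqk_mul; apply: Hp_set0.
set W := U :\: [set w | e v w].
have hr' : (al (U :\ v) <= r)%N by apply: leq_trans hr; apply: al_sub; apply: subsetDl.
have hW : (al W <= r)%N by apply: leq_trans hr; apply: al_sub; apply: subsetDl.
have IH1 : eqk k ((1 - 'X) ^+ r * Hp (U :\ v) k) (Qp (U :\ v) r).
  apply: IH hr'; move: hN; rewrite (cardsD1 v U) vU ltnS add1n => h; exact: h.
have E : eqk k ((1 - 'X) ^+ r * Hp U k)
    (Qp (U :\ v) r + 'X * ((1 - 'X) ^+ r * Hp W k)).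
  have H1 := eqk_mul ((1 - 'X) ^+ r) (@Hp_rec U v k vU). apply: eqk_trans H1 _.
  rewrite mulrDr mulrCA; apply: eqk_add => //; exact: eqk_refl.
have [WU|WU] := eqVneq W U.
  apply: eqk_cancel; rewrite WU in E.
  have QE : (1 - 'X) * Qp U r = Qp (U :\ v) r.
    by rewrite mulrBl mul1r {1}(Q_rec vU hr) -/W WU addrK.
  rewrite QE; move=> i hi; by rewrite mulrBl mul1r coefB (E i hi) coefD addrK.
have pW : W \proper U by rewrite properEneq WU /=; apply: subsetDl.
have IH2 : eqk k ((1 - 'X) ^+ r * Hp W k) (Qp W r).
  by apply: IH hW; apply: leq_trans (proper_card pW) _; rewrite -ltnS.
rewrite (Q_rec vU hr) -/W; apply: eqk_trans E _; apply: eqk_add; first exact: eqk_refl.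
exact: eqk_mul.
Qed.


Lemma term_top (s r : nat) : (s <= r)%N -> ('X^s * (1 - 'X) ^+ (r - s) : {poly int})`_r = (-1) ^+ (r - s).
Proof. by move=> h; rewrite coefXnM ltnNge h /= coef_1subX binn mulr1. Qed.

Lemma term_high (s r k : nat) : (s <= r)%N -> (r < k)%N -> ('X^s * (1 - 'X) ^+ (r - s) : {poly int})`_k = 0.
Proof.
move=> h1 h2; rewrite coefXnM; case: ifP => // _.
by rewrite coef_1subX bin_small ?mulr0 //; lia.
Qed.

Lemma al_T : al setT = alpha e.
Proof. by rewrite /al /alpha; apply: eq_bigl => A; rewrite subsetT andbT. Qed.

Lemma hcoef_Q k : hcoef e k = (Qp setT (alpha e))`_k.
Proof.
rewrite -(@main_eqk (alpha e) k setT (eq_leq al_T) k (leqnn k)) coefM /hcoef.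
apply: eq_bigr => j _; rewrite coef_1subX coef_poly ltnS leq_subr.
congr (_ * _ * _); first by rewrite natz.
congr (Posz _); rewrite /HU /hilb; apply: eq_card => a; rewrite !inE subsetT andbT //.
Qed.

Lemma hcoef_high k : (alpha e < k)%N -> hcoef e k = 0.
Proof.
move=> h; rewrite hcoef_Q /Qp coef_sum big1; first done.
move=> A /andP[iA _]; apply: term_high h; rewrite -al_T; exact: card_le_al.
Qed.

Lemma hcoef_top : hcoef e (alpha e) =
  (-1) ^+ alpha e * \sum_(A : {set V} | independent e A) (-1) ^+ #|A|.
Proof.
rewrite hcoef_Q /Qp coef_sum mulr_sumr; apply: eq_big => [A|A iA]; first by rewrite subsetT andbT.
have h : (#|A| <= alpha e)%N by rewrite -al_T; apply: card_le_al; rewrite ?subsetT //; case/andP: iA.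
rewrite term_top //; move: h; move: (alpha e) (#|A|) => a0 b0 hb.
rewrite -{2}(subnK hb) exprD -mulrA -exprD addnn.
have -> : ((-1) ^+ b0.*2 : int) = 1 by rewrite -signr_odd odd_double.
by rewrite mulr1.
Qed.


Lemma sign_inv (P : pred {set V}) (phi : {set V} -> {set V}) :
  (forall A, P A -> P (phi A)) -> (forall A, P A -> phi (phi A) = A) ->
  (forall A, P A -> odd #|phi A| = ~~ odd #|A|) ->
  \sum_(A | P A) (-1) ^+ #|A| = 0 :> int.
Proof.
move=> h1 h2 h3.
pose psi A := if P A then phi A else A.
have psiK : involutive psi.
  by move=> A; rewrite /psi; case hA: (P A); [rewrite (h1 _ hA) (h2 _ hA) | rewrite hA].
have Pp A : P (psi A) = P A by rewrite /psi; case: ifP => h //; rewrite h1.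
set s := (X in X = _).
have : s = - s.
  rewrite {1}/s (reindex_inj (inv_inj psiK)) /= -sumrN.
  apply: eq_big => [A|A]; first exact: Pp.
  rewrite Pp => hA; rewrite /psi hA -[LHS]signr_odd h3 // -[in RHS]signr_odd; case: (odd #|A|) => /=; rewrite ?expr0 ?expr1 ?opprK //.
lia.
Qed.

Definition tg (A : {set V}) (w : V) : {set V} := if w \in A then A :\ w else w |: A.

Lemma in_tg A w u : (u \in tg A w) = (if u == w then w \notin A else u \in A).
Proof.
rewrite /tg; case: ifP => h; rewrite !inE; case: eqP => [->|] //=; by rewrite h.
Qed.

Lemma tgK A w : tg (tg A w) w = A.
Proof. by apply/setP => u; rewrite !in_tg; case: eqP => [->|]; rewrite ?eqxx ?negbK. Qed.

Lemma odd_tg A w : odd #|tg A w| = ~~ odd #|A|.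
Proof.
rewrite /tg; case: ifP => h.
  by rewrite [in RHS](cardsD1 w A) h add1n /= negbK.
by rewrite cardsU1 h add1n.
Qed.

Lemma indep_tg A w : independent e A -> (w \notin A -> forall u, u \in A -> ~~ e w u) ->
  independent e (tg A w).
Proof.
move=> iA h; rewrite /tg; case: ifP => wA.
  by apply: indep_sub iA; apply: subsetDl.
by apply: indepU1 => //; apply: h; rewrite wA.
Qed.

End Gen.


Section Graph.
Local Open Scope ring_scope.
Variables (n m : nat) (f : 'I_n -> nat) (t : 'I_m -> nat) (b : 'I_n -> 'I_m -> bool).
Hypotheses (hn : (0 < n)%N) (hc : bip_connected b) (hf : forall i, (0 < f i)%N).

Local Notation V := (vert f t).
Local Notation e := (gedge (f := f) (t := t) b).

Definition vX (i : 'I_n) : V := inl (inl (inl i)).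
Definition vY (j : 'I_m) : V := inl (inl (inr j)).
Definition vL (l : {i : 'I_n & 'I_(f i)}) : V := inl (inr l).
Definition vT (p : {j : 'I_m & 'I_(t j)}) (c : bool) : V := inr (p, c).

Lemma esymG : symmetric e.
Proof. by move=> u v; rewrite /gedge orbC. Qed.

Lemma eirrG : irreflexive e.
Proof. by case=> [[[x|y]|l]|[p c]]; rewrite /gedge /= ?eqxx ?orbF ?andbF. Qed.

Lemma ynbr j : exists i, b i j.
Proof.
have := hc (inl (Ordinal hn)) (inr j); case/connectP => p.
elim/last_ind: p => [|p y _] /=; first by move=> _ [].
rewrite rcons_path last_rcons => /andP[_ h] eq; subst y.
by move: h; case: (last _ p) => [i|j'] //= h; exists i.
Qed.

Lemma eL l u : e (vL l) u -> u = vX (tag l).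
Proof. by case: u => [[[x|y]|l']|[q c]] //=; rewrite /gedge /= => /eqP ->. Qed.

Lemma eT p c u : e (vT p c) u -> u = vY (tag p) \/ u = vT p (~~ c).
Proof.
case: u => [[[x|y]|l']|[q c']] //=; rewrite /gedge /=.
  by move/eqP => ->; left.
case/orP => /andP[/eqP -> h]; right; congr vT; by case: c c' h => -[].
Qed.


Definition leaf0 (i : 'I_n) : {i : 'I_n & 'I_(f i)} := existT _ i (Ordinal (hf i)).

Definition sig (w : V) : V :=
  match w with
  | inl (inl (inl i)) => vL (leaf0 i)
  | inl (inl (inr j)) => if [pick p : {j : 'I_m & 'I_(t j)} | tag p == j] is Some p then vT p true else vY j
  | inl (inr l) => vL l
  | inr (p, _) => vT p true
  end.

Definition slotb (w : V) : bool :=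
  match w with
  | inl (inl (inl _)) => false
  | inl (inl (inr j)) => t j == 0%N
  | inl (inr _) => true
  | inr (_, c) => c
  end.

Lemma sig_slot w : slotb (sig w).
Proof.
case: w => [[[x|y]|l]|[p c]] //=.
case: pickP => [p hp|none] //=; apply: contraT; rewrite -lt0n => hpos.
by have := none (existT (fun j => 'I_(t j)) y (Ordinal hpos)); rewrite /= eqxx.
Qed.

Lemma sig_eq_adj u w : sig u = sig w -> u = w \/ e u w.
Proof.
case: u => [[[x|y]|l]|[p c]]; case: w => [[[x'|y']|l']|[p' c']] /=;
  try (case: pickP => [q hq|nq]); try (case: pickP => [q' hq'|nq']); try discriminate.
all: try (by move=> _; left).
- by move=> [=] ->; left.
- by move=> [=] <-; right; rewrite /gedge /= eqxx.
- by move=> [=] eq; left; rewrite -(eqP hq) -(eqP hq') eq.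
- by move=> [=] ->; left.
- by move=> [=] <-; right; rewrite /gedge /= hq.
- by move=> [=] ->; right; rewrite /gedge /=.
- by move=> [=] ->; left.
- by move=> [=] ->; right; rewrite /gedge /= ?hq ?orbT.
- move=> [=] <-; case: c c' => -[]; by [left | right; rewrite /gedge /= eqxx].
Qed.


Definition Slots : {set V} := [set w | slotb w].

Lemma tri_nonempty (p : {j : 'I_m & 'I_(t j)}) : (t (tag p) != 0)%N.
Proof. by case: p => j l /=; rewrite -lt0n; apply: leq_ltn_trans (ltn_ord l). Qed.

Lemma slots_indep : independent e Slots.
Proof.
apply/indepP => u w; rewrite !inE.
case: u => [[[x|y]|l]|[p c]]; case: w => [[[x'|y']|l']|[p' c']]; rewrite /gedge /= //.
- move=> /eqP ty _; rewrite orbF; apply/negP => /eqP tp.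
  by have := tri_nonempty p'; rewrite tp ty.
- move=> _ /eqP ty; apply/negP => /eqP tp.
  by have := tri_nonempty p; rewrite tp ty.
- by case: c; case: c' => //=; rewrite !andbF.
Qed.


Lemma alpha_slots : alpha e = #|Slots|.
Proof.
apply/eqP; rewrite eqn_leq; apply/andP; split; last first.
  by apply: (@leq_bigmax_cond _ (fun A => independent e A) (fun A : {set V} => #|A|) Slots slots_indep).
apply/bigmax_leqP => A iA.
have inj : {in A &, injective sig}.
  move=> u w uA wA /sig_eq_adj [] // euw.
  by move/indepP: iA => /(_ u w uA wA); rewrite euw.
rewrite -(card_in_imset inj); apply: subset_leq_card; apply/subsetP => _ /imsetP[w _ ->].
by rewrite inE sig_slot.
Qed.


Definition allX (A : {set V}) := [forall i, vX i \in A].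
Definition allT (A : {set V}) := [forall p, vT p true \in A].
Definition phi1 (A : {set V}) : {set V} :=
  if [pick i | vX i \notin A] is Some i then tg A (vL (leaf0 i)) else A.
Definition phi2 (A : {set V}) : {set V} :=
  if [pick p | vT p true \notin A] is Some p then tg A (vT p false) else A.

Lemma pickX_tg A w : (forall i, vX i != w) ->
  [pick i | vX i \notin tg A w] = [pick i | vX i \notin A].
Proof. by move=> h; apply: eq_pick => i /=; rewrite in_tg (negbTE (h i)). Qed.

Lemma allX_tg A w : (forall i, vX i != w) -> allX (tg A w) = allX A.
Proof. by move=> h; apply: eq_forallb => i; rewrite in_tg (negbTE (h i)). Qed.

Lemma pickT_tg A w : (forall p, vT p true != w) ->
  [pick p | vT p true \notin tg A w] = [pick p | vT p true \notin A].
Proof. by move=> h; apply: eq_pick => p /=; rewrite in_tg (negbTE (h p)). Qed.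

Lemma allT_tg A w : (forall p, vT p true != w) -> allT (tg A w) = allT A.
Proof. by move=> h; apply: eq_forallb => p; rewrite in_tg (negbTE (h p)). Qed.

Lemma step1 : \sum_(A | independent e A && ~~ allX A) (-1) ^+ #|A| = 0 :> int.
Proof.
have key A : independent e A -> ~~ allX A ->
    exists i, [pick i | vX i \notin A] = Some i /\ vX i \notin A.
  move=> _ nX; case: pickP => [i hi|none]; first by exists i.
  by case/negP: nX; apply/forallP => i; have := none i; rewrite /= => /negbFE.
have hw (i0 : 'I_n) : forall i', vX i' != vL (leaf0 i0) by [].
apply: (@sign_inv _ (fun A => independent e A && ~~ allX A) phi1).
- move=> A /andP[iA nX]; have [i [hp hi]] := key A iA nX.
  rewrite /phi1 hp allX_tg // nX andbT; apply: (indep_tg esymG eirrG iA) => _ u uA.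
  by apply/negP => /eL eu; move: uA; rewrite eu /= (negbTE hi).
- move=> A /andP[iA nX]; have [i [hp hi]] := key A iA nX.
  by rewrite /phi1 hp pickX_tg // hp tgK.
- move=> A /andP[iA nX]; have [i [hp hi]] := key A iA nX.
  by rewrite /phi1 hp odd_tg.
Qed.


Lemma noY A j : independent e A -> allX A -> vY j \notin A.
Proof.
move=> iA aX; have [i bij] := ynbr j; apply/negP => yA.
have xA : vX i \in A by move/forallP: aX.
by move/indepP: iA => /(_ _ _ yA xA); rewrite /gedge /= bij.
Qed.

Lemma step2 : \sum_(A | independent e A && allX A && ~~ allT A) (-1) ^+ #|A| = 0 :> int.
Proof.
have key A : ~~ allT A ->
    exists p, [pick p | vT p true \notin A] = Some p /\ vT p true \notin A.
  move=> nT; case: pickP => [p hp|none]; first by exists p.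
  by case/negP: nT; apply/forallP => p; have := none p; rewrite /= => /negbFE.
have hw (p0 : {j : 'I_m & 'I_(t j)}) : forall p, vT p true != vT p0 false.
  by move=> p; apply/negP => /eqP [].
have hx (p0 : {j : 'I_m & 'I_(t j)}) : forall i, vX i != vT p0 false by [].
apply: (@sign_inv _ (fun A => independent e A && allX A && ~~ allT A) phi2).
- move=> A /andP[/andP[iA aX] nT]; have [p [hp hi]] := key A nT.
  rewrite /phi2 hp allX_tg // allT_tg // aX nT !andbT.
  apply: (indep_tg esymG eirrG iA) => _ u uA.
  apply/negP => /eT [] eu; move: uA; rewrite eu.
    by rewrite (negbTE (noY _ iA aX)).
  by rewrite /= (negbTE hi).
- move=> A /andP[_ nT]; have [p [hp hi]] := key A nT.
  by rewrite /phi2 hp pickT_tg // hp tgK.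
- move=> A /andP[_ nT]; have [p [hp hi]] := key A nT.
  by rewrite /phi2 hp odd_tg.
Qed.


Definition kind (w : V) : bool :=
  match w with inl (inl (inl _)) => true | inr (_, c) => c | _ => false end.
Definition A0 : {set V} := [set w | kind w].

Lemma A0_char A : (independent e A && allX A && allT A) = (A == A0).
Proof.
apply/idP/eqP.
- case/andP=> [/andP[iA aX] aT]; apply/setP => w; rewrite inE.
  case: w => [[[x|y]|l]|[p c]] /=.
  + exact: (forallP aX x).
  + by apply/negbTE; apply: noY.
  + apply/negbTE/negP => lA.
    by move/indepP: iA => /(_ _ _ (forallP aX (tag l)) lA); rewrite /gedge /= eqxx.
  + case: c; first exact: (forallP aT p).
    apply/negbTE/negP => pA.
    by move/indepP: iA => /(_ _ _ (forallP aT p) pA); rewrite /gedge /= eqxx.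
- move=> ->; rewrite -andbA; apply/and3P; split.
  + apply/indepP => u w; rewrite !inE.
    case: u => [[[x|y]|l]|[p c]]; case: w => [[[x'|y']|l']|[p' c']]; rewrite /gedge //=.
    by move=> -> ->; rewrite !andbF.
  + by apply/forallP => i; rewrite inE.
  + by apply/forallP => p; rewrite inE.
Qed.

Lemma card_setE (T : finType) (P : pred T) : #|[set w | P w]| = (\sum_(w : T) (P w : nat))%N.
Proof.
rewrite -sum1_card big_mkcond /=; apply: eq_bigr => w _; rewrite inE; by case: (P w).
Qed.

Let TT := #|{: {j : 'I_m & 'I_(t j)}}|.

Lemma sum_bool_pair (T : finType) (F : T -> bool -> nat) :
  (\sum_(x : T * bool) F x.1 x.2 = \sum_(p : T) (F p true + F p false))%N.
Proof. by rewrite -pair_bigA /=; apply: eq_bigr => p _; rewrite big_bool. Qed.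

Lemma card_A0 : #|A0| = (n + TT)%N.
Proof.
rewrite card_setE !big_sumType /= !sum_nat_const card_ord !muln0 muln1 !addn0.
rewrite (eq_bigr (fun x : {j : 'I_m & 'I_(t j)} * bool => (x.2 : nat))); last by case.
rewrite (sum_bool_pair (fun _ c => (c : nat))) /= sum_nat_const muln1 //.
Qed.


Lemma card_slots : #|Slots| = (\sum_(i < n) f i + TT + #|[set j : 'I_m | t j == 0%N]|)%N.
Proof.
rewrite /Slots card_setE !big_sumType /= !sum_nat_const !muln0 muln1 add0n.
rewrite (eq_bigr (fun x : {j : 'I_m & 'I_(t j)} * bool => (x.2 : nat))); last by case.
rewrite (sum_bool_pair (fun _ c => (c : nat))) /= sum_nat_const muln1 tagnat.card card_setE.
move: (\sum_(i < m) _)%N (\sum_(i < n) f i)%N => a c.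
apply: (@eq_trans _ _ (c + a + TT)%N); first by rewrite (addnC a c).
by rewrite -addnA (addnC a) addnA.
Qed.

Lemma sign_sum : \sum_(A | independent e A) (-1) ^+ #|A| = (-1) ^+ (n + TT) :> int.
Proof.
rewrite (bigID allX) /= step1 addr0 (bigID allT) /= step2 addr0.
rewrite (eq_bigl (fun A => A == A0)); last by move=> A; rewrite A0_char.
by rewrite big_pred1_eq card_A0.
Qed.

End Graph.


Section Fin.
Import GRing.Theory.
Local Open Scope ring_scope.
Lemma par (F T m0 n : nat) :
  ((-1) ^+ (F + T + m0) * (-1) ^+ (n + T) == 1 :> int) = ~~ odd (n + F + m0).
Proof.
rewrite -exprD -signr_odd.
have -> : (F + T + m0 + (n + T) = (n + F + m0) + T.*2)%N by rewrite -addnn; lia.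
by rewrite oddD odd_double addbF; case: (odd _).
Qed.
End Fin.

Theorem corollary4p4 (n m : nat) (f : 'I_n -> nat) (t : 'I_m -> nat)
    (b : 'I_n -> 'I_m -> bool) :
  (0 < n)%N -> (0 < m)%N -> bip_connected b -> (forall i, 0 < f i)%N ->
  pseudo_gorenstein_star (gedge (f := f) (t := t) b) <->
  ~~ odd (n + \sum_(i < n) f i + #|[set j : 'I_m | t j == 0%N]|).
Proof.
move=> hn hm hc hf.
have HT := hcoef_top (esymG (f:=f) (t:=t) b) (eirrG (f:=f) (t:=t) b).
rewrite (sign_sum t hn hc hf) (alpha_slots t b hf) (card_slots f t) in HT.
rewrite /pseudo_gorenstein_star (alpha_slots t b hf) (card_slots f t) HT -(par _ #|{: {j : 'I_m & 'I_(t j)}}|).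
split; first by case=> /eqP.
move=> /eqP h; split => // k hk; apply: (hcoef_high (esymG (f:=f) (t:=t) b) (eirrG (f:=f) (t:=t) b)).
by rewrite (alpha_slots t b hf) (card_slots f t).
Qed.
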